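(* Let $p(x)\in\mathbb{C}[x_1,\ldots,x_n]$ be any polynomial. Then there exists a nonconfluent holonomic hypergeometric (Horn) system of the form $$x_j P_j(\theta)f(x)=Q_j(\theta)f(x),\qquad j=1,\ldots,n,$$ having $p(x)$ as one of its solutions. Moreover, this system can be chosen so that the left ideal in the Weyl algebra generated by the operators $x_jP_j(\theta)-Q_j(\theta)$, $j=1,\ldots,n$, admits a basis consisting of a family of pairwise commuting differential operators.
   Context: Notation: $x=(x_1,\ldots,x_n)$, $\theta=(\theta_1,\ldots,\theta_n)$ with $\theta_j=x_j\frac{\partial}{\partial x_j}$, $e_1,\ldots,e_n$ the standard basis of $\mathbb{Z}^n$. A function $\varphi(s)$ of $s\in\mathbb{C}^n$ is a hypergeometric (Ore–Sato) coefficient if for each $j$ the quotient $\varphi(s+e_j)/\varphi(s)$ is a rational function of $s$, written $P_j(s)/Q_j(s+e_j)$ with polynomials $P_j,Q_j$. The Horn hypergeometric system defined by $\varphi$ is the system $x_jP_j(\theta)f=Q_j(\theta)f$, $j=1,\ldots,n$; any (formal) Laurent series $\sum_s\varphi(s)x^s$ is a formal solution of it. The system is holonomic if it has finite holonomic rank, and nonconfluent if $\deg P_j=\deg Q_j$ for every $j=1,\ldots,n$. *)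

(* Defs.v *)
From HB Require Import structures.
From mathcomp Require Import all_boot all_order all_algebra.
From mathcomp Require Import mpoly.
From mathcomp Require Import Rstruct complex.

Set Implicit Arguments.
Unset Strict Implicit.
Unset Printing Implicit Defensive.

Import GRing.Theory.
Local Open Scope ring_scope.

Definition C : Type := complex Rdefinitions.R.

Notation Pol n := {mpoly C[n]}.

(* Differential operators are represented through their (faithful, since
   char C = 0) action on C[x]. *)
Definition Op (n : nat) := Pol n -> Pol n.

Definition mulX n (i : 'I_n) : Op n := fun f => 'X_i * f.
Definition der n (i : 'I_n) : Op n := fun f => mderiv i f.

Inductive weyl (n : nat) : Op n -> Prop :=
| weyl_X (i : 'I_n) : weyl (mulX i)
| weyl_D (i : 'I_n) : weyl (der i)
| weyl_scal (c : C) : weyl (fun f => c *: f)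
| weyl_add (A B : Op n) : weyl A -> weyl B -> weyl (fun f => A f + B f)
| weyl_comp (A B : Op n) : weyl A -> weyl B -> weyl (fun f => A (B f)).

Definition theta n (i : 'I_n) : Op n := fun f => 'X_i * mderiv i f.

Definition thetam n (m : 'X_{1..n}) : Op n :=
  fun f => foldr (fun i g => iter (m i) (theta i) g) f (enum 'I_n).

Definition eval_theta n (P : Pol n) : Op n :=
  fun f => \sum_(m <- msupp P) P@_m *: thetam m f.

Definition horn_op n (j : 'I_n) (P Q : Pol n) : Op n :=
  fun f => 'X_j * eval_theta P f - eval_theta Q f.

Definition derm n (b : 'X_{1..n}) : Op n := fun f => mderivm b f.

Definition in_left_ideal n k (L : 'I_k -> Op n) (A : Op n) : Prop :=
  exists B : 'I_k -> Op n, (forall i, weyl (B i)) /\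
    forall f, A f = \sum_(i < k) B i (L i f).

(* Finite holonomic rank of the left ideal I = D.L: the rank is
   dim_{C(x)} C(x)<d> / C(x)<d> I = dim_{C(x)} S^-1 (D/I), S = C[x]\{0};
   it is finite iff finitely many classes of monomials d^a (a in B) span
   D/I up to C[x]-torsion, i.e. for every b there is q <> 0 with
   q d^b in sum_(a in B) C[x] d^a + I. *)
Definition finite_holonomic_rank n k (L : 'I_k -> Op n) : Prop :=
  exists Bs : seq 'X_{1..n},
    forall b : 'X_{1..n}, exists (q : Pol n) (c : 'X_{1..n} -> Pol n),
      q != 0 /\
      in_left_ideal L (fun f => q * derm b f - \sum_(a <- Bs) c a * derm a f).

Definition shift n (s : 'I_n -> C) (j : 'I_n) : 'I_n -> C :=
  fun i => s i + (i == j)%:R.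

(* phi : C^n -> C is a hypergeometric (Ore-Sato) coefficient with
   phi(s+e_j)/phi(s) = P_j(s)/Q_j(s+e_j), written without division:
   phi is not identically zero and
   phi(s+e_j) Q_j(s+e_j) = P_j(s) phi(s) for all s. *)
Definition ore_sato_coeff n (phi : ('I_n -> C) -> C) (P Q : 'I_n -> Pol n) :=
  (exists s, phi s != 0) /\
  forall (j : 'I_n) (s : 'I_n -> C),
    phi (shift s j) * (Q j).@[shift s j] = (P j).@[s] * phi s.

(* Nonconfluent: deg P_j = deg Q_j for all j (msize = total degree + 1). *)
Definition nonconfluent n (P Q : 'I_n -> Pol n) :=
  forall j, msize (P j) = msize (Q j).

(* Main.v *)
Require Import Defs.
From HB Require Import structures.
From mathcomp Require Import all_boot all_order all_algebra.
From mathcomp Require Import mpoly.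
From mathcomp Require Import Rstruct complex.
From Stdlib Require Import FunctionalExtensionality.
From mathcomp Require Import ring.
Import GRing.Theory.
Local Open Scope ring_scope.
Set Implicit Arguments.
Unset Strict Implicit.

Section S.
Variable n : nat.
Implicit Types (f g h : Pol n) (s m : 'X_{1..n}).

Definition lin (A : Op n) := forall (c : C) f g, A (c *: f + g) = c *: A f + A g.

Lemma lin0 A : lin A -> A 0 = 0.
Proof. move=> hA; have := hA 1 0 0; rewrite scaler0 add0r scale1r => h.
by apply: (addrI (A 0)); rewrite addr0 -h. Qed.

Lemma lin_ext A B : lin A -> lin B -> (forall s, A 'X_[s] = B 'X_[s]) ->
  forall f, A f = B f.
Proof.
move=> hA hB hX f; rewrite [f]mpolyE; elim: (msupp f) => [|m r ih].
  by rewrite !big_nil !lin0.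
by rewrite !big_cons hA hB ih hX.
Qed.

Lemma weyl_ext (A B : Op n) : weyl A -> (forall f, A f = B f) -> weyl B.
Proof. by move=> w e; move: w; have -> : A = B by apply: functional_extensionality. Qed.

Lemma theta_lin i : lin (theta i).
Proof. by move=> c f g; rewrite /theta mderivD mderivZ mulrDr scalerAr. Qed.

Lemma theta_X i s : theta i 'X_[s] = (s i)%:R *: 'X_[s].
Proof.
rewrite /theta mderivX -scalerAr -mpolyXD.
case: (posnP (s i)) => [->|hs]; first by rewrite !scale0r.
congr (_ *: 'X_[_]); apply/mnmP => k; rewrite mnmDE mnmBE mnm1E.
case: eqP => [<-|_]; last by rewrite subn0.
by rewrite add1n subn1 prednK.
Qed.

Lemma lin_iter (A : Op n) k : lin A -> lin (iter k A).
Proof. by move=> hA; elim: k => // k ih c f g /=; rewrite (ih c f g) hA. Qed.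

Lemma thetam_lin m : lin (thetam m).
Proof.
rewrite /thetam => c f g; elim: (enum 'I_n) => //= i r ih.
by rewrite ih ((@lin_iter _ (m i) (theta_lin i)) c).
Qed.

Lemma thetam_X m s :
  thetam m 'X_[s] = (\prod_(i < n) ((s i)%:R ^+ m i : C)) *: 'X_[s].
Proof.
rewrite /thetam -big_enum /=.
elim: (enum 'I_n) => /= [|i r ih]; first by rewrite big_nil scale1r.
rewrite ih big_cons; elim: (m i) => [|k ihk] /=; first by rewrite expr0 mul1r.
rewrite ihk /theta mderivZ -scalerAr -/(theta i _).
rewrite theta_X scalerA exprS; congr (_ *: _); ring.
Qed.

Definition cast s : 'I_n -> C := fun i => (s i)%:R.

Lemma eval_theta_X P s : eval_theta P 'X_[s] = P.@[cast s] *: 'X_[s].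
Proof.
rewrite /eval_theta mevalE scaler_suml; apply: eq_bigr => m _.
by rewrite thetam_X scalerA.
Qed.

Lemma eval_theta_lin P : lin (eval_theta P).
Proof.
move=> c f g; rewrite /eval_theta scaler_sumr -big_split /=; apply: eq_bigr => m _.
by rewrite thetam_lin scalerDr !scalerA mulrC.
Qed.


Definition Rj (M : nat) (j : 'I_n) : Pol n := \prod_(k < M) ('X_j - (k%:R)%:MP).
Definition Dj (j : 'I_n) (M : nat) : Op n := fun f => mderivm (U_(j) *+ M) f.

Lemma Dj_lin j M : lin (Dj j M).
Proof. by move=> c f g; rewrite /Dj mderivmD mderivmZ. Qed.

Lemma Dj_S j M f : Dj j M.+1 f = mderiv j (Dj j M f).
Proof. by rewrite /Dj mulmS addmC mderivmDm mderivmU1m. Qed.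

Lemma Dj_X j k s : Dj j k 'X_[s] =
  (\prod_(l < k) (((s j - l)%N)%:R : C)) *: 'X_[s - U_(j) *+ k].
Proof.
elim: k => [|k ih]; first by rewrite big_ord0 scale1r /Dj mulm0n mderivm0m subm0.
rewrite Dj_S ih mderivZ mderivX scalerA big_ord_recr /=; congr (_ *: 'X_[_]).
  by rewrite mnmBE mulmnE mnm1E eqxx mul1n.
apply/mnmP => i; rewrite !mnmBE !mulmnE mnm1E; case: (j == i) => /=.
  by rewrite !mul1n -subnDA addn1.
by rewrite !mul0n !subn0.
Qed.

Lemma Rj_eval M j v : (Rj M j).@[v] = \prod_(k < M) (v j - k%:R).
Proof. by rewrite /Rj rmorph_prod; apply: eq_bigr => k _; rewrite rmorphB /= mevalXU mevalC. Qed.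

Lemma ET M j f : eval_theta (Rj M j) f = 'X_j ^+ M * Dj j M f.
Proof.
move: f; apply: lin_ext => [|c f g|s]; first exact: eval_theta_lin.
  by rewrite Dj_lin mulrDr scalerAr.
rewrite eval_theta_X Dj_X Rj_eval -scalerAr /cast mpolyXn -mpolyXD.
case: (leqP M (s j)) => hM.
  congr (_ *: 'X_[_]).
    by apply: eq_bigr => k _; rewrite natrB // ltnW // (leq_trans (ltn_ord k)).
  apply/mnmP => i; rewrite mnmDE mnmBE !mulmnE mnm1E.
  by case: eqP => [<-|_]; rewrite ?mul1n ?subnKC // !mul0n subn0.
rewrite [in LHS](bigD1 (Ordinal hM)) //= [in RHS](bigD1 (Ordinal hM)) //=.
by rewrite subrr subnn !mul0r !scale0r.
Qed.


Lemma weyl_zero : weyl (fun f : Pol n => 0).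
Proof. apply: (@weyl_ext (fun f => (0 : complex Rdefinitions.R) *: f)). exact: weyl_scal. by move=> f; rewrite scale0r. Qed.

Lemma weyl_id : weyl (fun f : Pol n => f).
Proof. apply: (@weyl_ext (fun f => (1 : complex Rdefinitions.R) *: f)). exact: weyl_scal. by move=> f; rewrite scale1r. Qed.

Lemma weyl_sum (T : Type) (r : seq T) (F : T -> Op n) :
  (forall x, weyl (F x)) -> weyl (fun f => \sum_(x <- r) F x f).
Proof.
move=> hF; elim: r => [|x r ih].
  by refine (weyl_ext weyl_zero _) => f; rewrite big_nil.
refine (weyl_ext (weyl_add (hF x) ih) _) => f; by rewrite big_cons.
Qed.

Lemma weyl_prodmul (T : Type) (r : seq T) (F : T -> Pol n) :
  (forall x, weyl (fun f => F x * f)) -> weyl (fun f => (\prod_(x <- r) F x) * f).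
Proof.
move=> hF; elim: r => [|x r ih].
  by refine (weyl_ext weyl_id _) => f; rewrite big_nil mul1r.
refine (weyl_ext (weyl_comp (hF x) ih) _) => f; by rewrite big_cons mulrA.
Qed.

Lemma weyl_mulXn i k : weyl (fun f : Pol n => 'X_i ^+ k * f).
Proof.
elim: k => [|k ih]; first by refine (weyl_ext weyl_id _) => f; rewrite expr0 mul1r.
refine (weyl_ext (weyl_comp (weyl_X i) ih) _) => f; by rewrite /mulX exprS mulrA.
Qed.

Lemma weyl_mul (q : Pol n) : weyl (fun f => q * f).
Proof.
have W : weyl (fun f => \sum_(m <- msupp q) q@_m *: ((\prod_(i < n) 'X_i ^+ m i) * f)).
  apply: weyl_sum => m; apply: weyl_comp (weyl_scal n _) _.
  exact: weyl_prodmul (fun i => weyl_mulXn i _).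
refine (weyl_ext W _) => f.
by rewrite [X in _ = X * f]mpolyE mulr_suml; apply: eq_bigr => m _; rewrite -scalerAl mpolyXE_id.
Qed.

Lemma weyl_iterD i k : weyl (fun f : Pol n => iter k (mderiv i) f).
Proof.
elim: k => [|k ih]; first exact: weyl_id.
exact: weyl_comp (weyl_D i) ih.
Qed.

Lemma weyl_derm b : weyl (@derm n b).
Proof.
rewrite /derm /mderivm; elim: (enum 'I_n) => [|i r ih]; first exact: weyl_id.
exact: weyl_comp (weyl_iterD i (b i)) ih.
Qed.

Lemma weyl_Dj j M : weyl (Dj j M).
Proof. exact: weyl_derm. Qed.

Definition gj (j : 'I_n) M : Pol n := ('X_j - 1) * 'X_j ^+ M.

Lemma horn_form M j f : horn_op j (Rj M j) (Rj M j) f = gj j M * Dj j M f.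
Proof. by rewrite /horn_op ET /gj -mulrA mulrBl mul1r. Qed.


Lemma mderiv_1 i : mderiv i (1 : Pol n) = 0.
Proof. by rewrite -mpolyC1 mderivC. Qed.

Lemma mderiv_pow_indep i (q : Pol n) k : mderiv i q = 0 -> mderiv i (q ^+ k) = 0.
Proof.
move=> h; elim: k => [|k ih]; first by rewrite expr0 mderiv_1.
by rewrite exprS mderivM h ih mul0r mulr0 addr0.
Qed.

Lemma mderiv_pow i (q : Pol n) k :
  mderiv i (q ^+ k.+1) = (k.+1)%:R * (q ^+ k * mderiv i q).
Proof.
elim: k => [|k ih]; first by rewrite expr1 expr0 mul1r mul1r.
rewrite [in LHS]exprS mderivM ih -[(k.+2)%:R]natr1 mulrDl mul1r addrC.
congr (_ + _); last by rewrite mulrC.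
by rewrite mulrCA; congr (_ * _); rewrite mulrA -exprS.
Qed.

Lemma mderivX_indep i j : i != j -> mderiv i ('X_j : Pol n) = 0.
Proof. by move=> ne; rewrite mderivX mnm1E eq_sym (negPf ne) scale0r. Qed.

Lemma gj_indep i j M : i != j -> mderiv i (gj j M) = 0.
Proof.
move=> ne; rewrite /gj mderivM mderivB mderivX_indep // mderiv_1 subr0 mul0r add0r.
by rewrite mderiv_pow_indep ?mulr0 // mderivX_indep.
Qed.

Lemma mderiv_mulindep i (q f : Pol n) : mderiv i q = 0 ->
  mderiv i (q * f) = q * mderiv i f.
Proof. by move=> h; rewrite mderivM h mul0r add0r. Qed.

Lemma derm_mulindep (b : 'X_{1..n}) (q f : Pol n) :
  (forall i, b i != 0%N -> mderiv i q = 0) -> mderivm b (q * f) = q * mderivm b f.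
Proof.
move=> h; rewrite /mderivm; elim: (enum 'I_n) => [|i r ih] //=; rewrite ih.
case: (posnP (b i)) => [->|hb] //.
have hi : mderiv i q = 0 by apply: h; rewrite -lt0n.
elim: (b i) => [|k ihk] //=.
by rewrite ihk mderiv_mulindep.
Qed.

Lemma claimA j M k : exists B : Op n, weyl B /\
  forall h, gj j M ^+ k.+1 * Dj j k h = B (gj j M * h).
Proof.
set g := gj j M.
elim: k => [|k [B [wB hB]]].
  exists (fun f => f); split; first exact: weyl_id.
  by move=> h; rewrite expr1 /Dj mulm0n mderivm0m.
exists (fun f => g * mderiv j (B f) + (- ((k.+1)%:R * mderiv j g)) * B f); split.
  apply: weyl_add; first exact: weyl_comp (weyl_mul g) (weyl_comp (weyl_D j) wB).
  exact: weyl_comp (weyl_mul _) wB.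
move=> h; rewrite -hB Dj_S mderivM mderiv_pow.
set u := Dj j k h; set d := mderiv j g; set v := mderiv j u.
set c : Pol n := k.+1%:R.
rewrite !exprS; move: (g ^+ k) => G; ring.
Qed.


Lemma Rj_eval_zero M j v : v j = 0 -> (Rj M.+1 j).@[v] = 0.
Proof. by move=> h; rewrite Rj_eval big_ord_recl h sub0r oppr0 mul0r. Qed.

Lemma lin_zero (A : Op n) (p : Pol n) : lin A ->
  (forall s, s \in msupp p -> A 'X_[s] = 0) -> A p = 0.
Proof.
move=> hA h; rewrite [p]mpolyE; move: (msupp p) h => r.
elim: r => [|m r ih] h; first by rewrite big_nil lin0.
rewrite big_cons hA h ?mem_head // scaler0 add0r ih // => s hs.
by apply: h; rewrite in_cons hs orbT.
Qed.

Lemma Dj_annih (p : Pol n) M j : (msize p <= M)%N -> Dj j M p = 0.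
Proof.
move=> hM; apply: lin_zero (Dj_lin j M) _ => s hs.
have hs' : (s j < M)%N.
  apply: leq_trans hM; apply: leq_ltn_trans (msize_mdeg_lt hs).
  by rewrite mdegE (bigD1 j) //= leq_addr.
by rewrite Dj_X (bigD1 (Ordinal hs')) //= subnn mul0r scale0r.
Qed.

Lemma X_neq0 j : ('X_j : Pol n) != 0.
Proof.
apply/eqP => h; have := congr1 (mcoeff U_(j)) h.
by rewrite mcoeffX eqxx mcoeff0 => /eqP; rewrite oner_eq0.
Qed.

Lemma gj_neq0 j M : gj j M != 0.
Proof.
rewrite /gj mulf_neq0 ?expf_neq0 ?X_neq0 //.
apply/eqP => h; have := congr1 (mcoeff U_(j)) h.
have hU : (U_(j)%MM == 0%MM :> 'X_{1..n}) = false.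
  by apply/negbTE; rewrite -mdeg_eq0 mdeg1.
rewrite mcoeffB mcoeffX eqxx mcoeff1 hU mcoeff0 subr0 => /eqP; by rewrite oner_eq0.
Qed.

Lemma Dj_mulindep i M (q f : Pol n) : mderiv i q = 0 -> Dj i M (q * f) = q * Dj i M f.
Proof.
move=> h; rewrite /Dj derm_mulindep // => k; rewrite mulmnE mnm1E.
case: (@eqP _ i k) => [<- //|_]; by rewrite mul0n eqxx.
Qed.

Lemma Dj_comm i i' M (f : Pol n) : Dj i M (Dj i' M f) = Dj i' M (Dj i M f).
Proof. by rewrite /Dj -!mderivmDm addmC. Qed.



Lemma horn_comm M i i' (f : Pol n) :
  horn_op i (Rj M i) (Rj M i) (horn_op i' (Rj M i') (Rj M i') f) =
  horn_op i' (Rj M i') (Rj M i') (horn_op i (Rj M i) (Rj M i) f).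
Proof.
case: (eqVneq i i') => [<-|ne]; first by [].
rewrite !horn_form.
have ne' : i' != i by rewrite eq_sym.
have h1 : Dj i M (gj i' M * Dj i' M f) = gj i' M * Dj i M (Dj i' M f).
  exact: (Dj_mulindep M (Dj i' M f) (gj_indep M ne)).
have h2 : Dj i' M (gj i M * Dj i M f) = gj i M * Dj i' M (Dj i M f).
  exact: (Dj_mulindep M (Dj i M f) (gj_indep M ne')).
rewrite h1 h2 [Dj i M (Dj i' M f)]Dj_comm; exact: mulrCA.
Qed.


Lemma holo M : finite_holonomic_rank (fun j => horn_op j (Rj M j) (Rj M j)).
Proof.
exists (map val (enum (predT : {pred 'X_{1..n < (n * M).+1}}))) => b.
case: (boolP [forall i, b i < M]%N) => hb.
  exists 1, (fun a => (a == b)%:R); split; first exact: oner_neq0.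
  exists (fun _ _ => 0); split; first by move=> _; exact: weyl_zero.
  move=> f; rewrite [X in _ = X]big1 // mul1r.
  have hmem : b \in map val (enum (predT : {pred 'X_{1..n < (n * M).+1}})).
    have hd : (mdeg b < (n * M).+1)%N.
      rewrite ltnS mdegE.
      have -> : (n * M = \sum_(i < n) M)%N by rewrite sum_nat_const card_ord.
      by apply: leq_sum => i _; apply: ltnW; apply: (forallP hb i).
    by apply/mapP; exists (BMultinom hd); rewrite ?mem_enum.
  have hu : uniq (map val (enum (predT : {pred 'X_{1..n < (n * M).+1}}))).
    by rewrite map_inj_uniq ?enum_uniq //; exact: val_inj.
  rewrite (bigD1_seq b) //= eqxx mul1r big1 => [|a /negPf ->]; last by rewrite mul0r.
  by rewrite addr0 subrr.
have [j hj] : exists j, (M <= b j)%N.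
  by move: hb; rewrite negb_forall => /existsP [j]; rewrite -leqNgt; exists j.
set k := (b j - M)%N; set c' := (b - U_(j) *+ b j)%MM.
have [B [wB hB]] := claimA j M k.
exists (gj j M ^+ k.+1), (fun _ => 0); split; first exact: expf_neq0 (gj_neq0 j M).
exists (fun i => if i == j then (fun f => mderivm c' (B f)) else (fun _ => 0)); split.
  by move=> i; case: ifP => _; [exact: weyl_comp (weyl_derm c') wB | exact: weyl_zero].
move=> f.
rewrite [X in _ = X](bigD1 j) //= eqxx [X in _ = _ + X]big1 => [|i /negPf -> //].
rewrite addr0 big1 => [|a _]; last by rewrite mul0r.
rewrite subr0 horn_form -hB.
have eb : b = (U_(j) *+ M + U_(j) *+ k + c')%MM.
  apply/mnmP => i; rewrite !mnmDE mnmBE !mulmnE mnm1E.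
  case: (@eqP _ j i) => [<-|_]; rewrite ?mul1n ?mul0n //.
    by rewrite subnn addn0 subnKC.
  by rewrite subn0.
rewrite /derm eb !mderivmDm -derm_mulindep //.
move=> i hi; apply: mderiv_pow_indep; apply: gj_indep.
apply/eqP => eij; move: hi; rewrite eij /c' mnmBE mulmnE mnm1E eqxx mul1n subnn.
by [].
Qed.

End S.
Theorem theorem3p1 (n : nat) (p : {mpoly C[n]}) :
  exists (P Q : 'I_n -> {mpoly C[n]}) (phi : ('I_n -> C) -> C),
    [/\ ore_sato_coeff phi P Q,
        nonconfluent P Q,
        finite_holonomic_rank (fun j => horn_op j (P j) (Q j)),
        (forall j, horn_op j (P j) (Q j) p = 0) &
        exists (m : nat) (G : 'I_m -> Op n),
          [/\ forall i, weyl (G i),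
              forall i i' f, G i (G i' f) = G i' (G i f) &
              forall A, in_left_ideal (fun j => horn_op j (P j) (Q j)) A
                        <-> in_left_ideal G A]].
Proof.
set M := (msize p).+1.
exists (fun j => Rj M j), (fun j => Rj M j).
exists (fun s => if [forall i, s i == 0] then (1 : complex Rdefinitions.R) else 0).
split.
- split.
    exists (fun _ => 0); rewrite (_ : [forall i, _] = true); first exact: oner_neq0.
    by apply/forallP.
  move=> j s.
  have E1 : forall v : 'I_n -> C, (if [forall i, v i == 0] then (1 : complex Rdefinitions.R) else 0) * (Rj M j).@[v] = 0.
    move=> v; case: ifP => [/forallP h|_]; last by rewrite mul0r.
    by rewrite Rj_eval_zero ?mulr0 //; apply/eqP.
  by rewrite E1 mulrC E1.
- move=> j; reflexivity.
- exact: holo.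
- move=> j. rewrite horn_form. rewrite Dj_annih. by rewrite mulr0. rewrite /M. by [].
- exists n, (fun j => horn_op j (Rj M j) (Rj M j)); split.
  + move=> i; refine (weyl_ext (weyl_comp (weyl_mul (gj i M)) (weyl_Dj i M)) _) => f.
    by rewrite horn_form.
  + move=> i i' f; exact: horn_comm.
  + move=> A; split; exact: id.
Qed.
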